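(* Let $K\subset\mathbb{R}^d$ be a convex body (not necessarily centrally symmetric). Let $\mathcal{K}=\{o_i+\tau_iK: i=1,\dots,n\}$ with $o_i\in\mathbb{R}^d$ and $\tau_1,\dots,\tau_n>0$ be a non-separable family of positive homothetic copies of $K$. Then there is a translate of $\frac{d+1}{2}\left(\sum_{i=1}^n\tau_i\right)K$ that covers $\bigcup\mathcal{K}$.
   Context: A convex body is a compact convex set with nonempty interior. A family $\mathcal{K}$ of convex bodies in $\mathbb{R}^d$ is called non-separable if every hyperplane $H$ that intersects $\operatorname{conv}\bigcup\mathcal{K}$ intersects some member of $\mathcal{K}$. *)

(* Defs.v *)
From Stdlib Require Import Reals.
From mathcomp Require Import all_boot.

Set Implicit Arguments.
Unset Strict Implicit.
Unset Printing Implicit Defensive.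

Local Open Scope R_scope.

Definition vec (d : nat) := 'I_d -> R.

Definition vadd {d} (x y : vec d) : vec d := fun i => x i + y i.
Definition vsub {d} (x y : vec d) : vec d := fun i => x i - y i.
Definition vscale {d} (t : R) (x : vec d) : vec d := fun i => t * x i.

Definition dot {d} (x y : vec d) : R := \big[Rplus/0]_(i < d) (x i * y i).
Definition vnorm {d} (x : vec d) : R := sqrt (dot x x).

Definition ball {d} (c : vec d) (r : R) : vec d -> Prop :=
  fun x => vnorm (vsub x c) < r.

Definition is_open {d} (S : vec d -> Prop) : Prop :=
  forall x, S x -> exists r, 0 < r /\ forall y, ball x r y -> S y.
Definition is_closed {d} (S : vec d -> Prop) : Prop :=
  is_open (fun x => ~ S x).
Definition bounded {d} (S : vec d -> Prop) : Prop :=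
  exists M, forall x, S x -> vnorm x <= M.
(* Compact subsets of R^d (Heine--Borel). *)
Definition compact {d} (S : vec d -> Prop) : Prop := is_closed S /\ bounded S.

Definition convex {d} (S : vec d -> Prop) : Prop :=
  forall x y t, S x -> S y -> 0 <= t <= 1 ->
    S (vadd (vscale t x) (vscale (1 - t) y)).

Definition nonempty_interior {d} (S : vec d -> Prop) : Prop :=
  exists x r, 0 < r /\ forall y, ball x r y -> S y.

Definition convex_body {d} (K : vec d -> Prop) : Prop :=
  compact K /\ convex K /\ nonempty_interior K.

Definition conv {d} (S : vec d -> Prop) : vec d -> Prop :=
  fun x => forall C, convex C -> (forall y, S y -> C y) -> C x.

Definition homot {d} (o : vec d) (tau : R) (K : vec d -> Prop) : vec d -> Prop :=
  fun x => exists k, K k /\ x = vadd o (vscale tau k).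

Definition hyperplane {d} (a : vec d) (b : R) : vec d -> Prop :=
  fun x => dot a x = b.
Definition nonzero {d} (a : vec d) : Prop := exists i, a i <> 0.

Definition family_union {d n} (F : 'I_n -> vec d -> Prop) : vec d -> Prop :=
  fun x => exists i, F i x.

Definition non_separable {d n} (F : 'I_n -> vec d -> Prop) : Prop :=
  forall (a : vec d) (b : R), nonzero a ->
    (exists x, conv (family_union F) x /\ hyperplane a b x) ->
    exists i x, F i x /\ hyperplane a b x.

(* Main.v *)
Require Import Defs.
From Stdlib Require Import Reals Lra Psatz Classical FunctionalExtensionality.
From mathcomp Require Import all_boot all_order all_algebra fingroup perm.
From mathcomp Require Import Rstruct.
Require Import Defs.
Set Implicit Arguments.
Unset Strict Implicit.
Unset Printing Implicit Defensive.
Local Open Scope R_scope.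

Section Sums.
Variable I : Type.
Implicit Types (s : seq I) (F G : I -> R).

Lemma sumN s F : - (\big[Rplus/0]_(i <- s) F i) = \big[Rplus/0]_(i <- s) - F i.
Proof. elim: s => [|a s IH]; rewrite ?big_nil ?big_cons; [lra| rewrite -IH; lra]. Qed.

Lemma sum_le s F G : (forall i, F i <= G i) ->
  \big[Rplus/0]_(i <- s) F i <= \big[Rplus/0]_(i <- s) G i.
Proof. move=> H; elim: s => [|a s IH]; rewrite ?big_nil ?big_cons; [lra| have := H a; lra]. Qed.

Lemma sum_ge0 s F : (forall i, 0 <= F i) -> 0 <= \big[Rplus/0]_(i <- s) F i.
Proof. move=> H; have := @sum_le s (fun _ => 0) F H; rewrite big1_eq; lra. Qed.

Lemma sum_sq_le s F : (forall i, 0 <= F i) ->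
  \big[Rplus/0]_(i <- s) (F i * F i) <= (\big[Rplus/0]_(i <- s) F i) * (\big[Rplus/0]_(i <- s) F i).
Proof.
move=> H; elim: s => [|a s IH]; rewrite ?big_nil ?big_cons; first lra.
have := sum_ge0 s H; have := H a; nra.
Qed.
End Sums.

Ltac sumcomb := rewrite /Rminus; repeat progress (rewrite ?sumN ?big_distrr -?big_split); apply: eq_bigr => ? _ /=.

Section Vec.
Variable d : nat.
Implicit Types x y z u : vec d.

Lemma dotC x y : dot x y = dot y x.
Proof. by apply: eq_bigr => i _; rewrite Rmult_comm. Qed.

Lemma dot_ge0 x : 0 <= dot x x.
Proof. apply: sum_ge0 => i; nra. Qed.

Lemma dot_term x i : x i * x i <= dot x x.
Proof.
rewrite /dot (bigD1 i) //=.
match goal with |- _ <= _ + ?S => have : 0 <= S end.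
  rewrite big_mkcond /=; apply: sum_ge0 => j; case: (_ != i) => /=; nra.
lra.
Qed.

Lemma nonzero_of_dot u : 0 < dot u u -> nonzero u.
Proof.
move=> H; apply: NNPP => Hn.
have H0 : forall i, u i = 0 by move=> i; apply: NNPP => Hi; apply: Hn; exists i.
suff : dot u u = 0 by lra.
by rewrite /dot big1 // => i _; rewrite H0; ring.
Qed.

Lemma vnorm_lt x r : 0 < r -> dot x x < r * r -> vnorm x < r.
Proof.
move=> Hr H; rewrite /vnorm.
have -> : r = sqrt (r * r) by rewrite sqrt_square; lra.
apply: sqrt_lt_1_alt; split; [apply: dot_ge0 | lra].
Qed.

Lemma vnorm_ge x r : 0 < r -> r <= vnorm x -> r * r <= dot x x.
Proof.
move=> Hr H; rewrite /vnorm in H.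
have := sqrt_sqrt _ (dot_ge0 x); have := sqrt_pos (dot x x); nra.
Qed.

Lemma vnorm_le x M : vnorm x <= M -> dot x x <= M * M.
Proof.
move=> H; rewrite /vnorm in H.
have := sqrt_sqrt _ (dot_ge0 x); have := sqrt_pos (dot x x); nra.
Qed.

Lemma coord_le x M i : vnorm x <= M -> Rabs (x i) <= M.
Proof.
move=> H; have H1 := vnorm_le H; have H2 := dot_term x i.
have HM : 0 <= M by have := sqrt_pos (dot x x); rewrite /vnorm in H; lra.
apply: Rabs_le; split; nra.
Qed.

End Vec.

Lemma lub_ex (E : R -> Prop) : (exists x, E x) -> (exists M, forall x, E x -> x <= M) ->
  exists m, (forall x, E x -> x <= m) /\ (forall b, b < m -> exists x, E x /\ b < x) /\
    (forall M, (forall x, E x -> x <= M) -> m <= M).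
Proof.
move=> He [M HM].
have [m [Hub Hl]] := completeness E (ex_intro _ M HM) He.
exists m; split; first exact: Hub; split; last exact: Hl.
move=> b Hb; apply: NNPP => Hn.
have : m <= b.
  apply: Hl => x Ex; apply: Rnot_lt_le => Hbx; apply: Hn; by exists x.
lra.
Qed.

Section Sep.
Variable d : nat.
Implicit Types x y z u k p : vec d.

Lemma dot_sub_sym x y : dot (vsub x y) (vsub x y) = dot (vsub y x) (vsub y x).
Proof. apply: eq_bigr => i _; rewrite /vsub; ring. Qed.

Lemma separation (K : vec d -> Prop) z : is_closed K -> convex K -> bounded K ->
  (exists k, K k) -> ~ K z ->
  exists u m, Defs.nonzero u /\ (forall k, K k -> dot u k <= m) /\ m < dot u z.
Proof.
move=> Hcl Hcv [Mb HMb] [k1 Hk1] Hz.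
have [r [Hr Hball]] := Hcl z Hz.
pose f k := dot (vsub z k) (vsub z k).
have Hfar : forall k, K k -> r * r <= f k.
  move=> k Hk; rewrite /f dot_sub_sym; apply: vnorm_ge => //.
  apply: Rnot_lt_le => Hlt; exact: (Hball k Hlt Hk).
have Hf0 : forall k, 0 <= f k by move=> k; apply: dot_ge0.
pose E := fun v => exists k, K k /\ v = - f k.
have [m0 [Hm0ub [Hm0ap Hm0l]]] : exists m : R, (forall v : R, E v -> v <= m) /\ (forall b, b < m -> exists v : R, E v /\ b < v) /\
    (forall M, (forall v : R, E v -> v <= M) -> m <= M).
  apply: lub_ex; first by exists (- f k1), k1.
  exists 0 => v [k [Hk ->]]; have := Hf0 k; lra.
have Hi : forall k, K k -> - m0 <= f k.
  move=> k Hk; have := Hm0ub (- f k) (ex_intro _ k (conj Hk erefl)); lra.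
have Hii : r * r <= - m0.
  have : m0 <= - (r * r); last lra.
  apply: Hm0l => v [k [Hk ->]]; have := Hfar k Hk; lra.
have Hiii : forall eps, 0 < eps -> exists p, K p /\ f p < - m0 + eps.
  move=> eps He; have [v [[p [Hp ->]] Hv]] := Hm0ap (m0 - eps) ltac:(lra).
  exists p; split => //; lra.
have HMb0 : 0 <= Mb by have := HMb k1 Hk1; have := sqrt_pos (dot k1 k1); rewrite /vnorm; lra.
have Hbd : forall k p, K k -> K p -> dot (vsub k p) (vsub k p) <= 4 * (Mb * Mb).
  move=> k p Hk Hp.
  have H1 := vnorm_le (HMb k Hk); have H2 := vnorm_le (HMb p Hp).
  have : 0 <= 2 * dot k k + 2 * dot p p - dot (vsub k p) (vsub k p); last lra.
  have -> : 2 * dot k k + 2 * dot p p - dot (vsub k p) (vsub k p) =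
     \big[Rplus/0]_(i < d) ((k i + p i) * (k i + p i)).
    rewrite /dot; sumcomb; rewrite /vsub; ring.
  apply: sum_ge0 => i; exact: Rle_0_sqr.
pose C := 4 * (Mb * Mb) + 1.
have HC : 0 < C by rewrite /C; nra.
pose t := Rmin 1 (r * r / (2 * C)).
have Ht0 : 0 < t by apply: Rmin_pos; [lra | apply: Rdiv_lt_0_compat; nra].
have Ht1 : t <= 1 by apply: Rmin_l.
have HtC : t * C <= r * r / 2.
  have : t <= r * r / (2 * C) by apply: Rmin_r.
  move=> H; have -> : r * r / 2 = (r * r / (2 * C)) * C by field; lra.
  apply: Rmult_le_compat_r; lra.
have Hrr : 0 < r * r by apply: Rmult_lt_0_compat.
have Htrr : 0 < t * (r * r) / 2 by have := Rmult_lt_0_compat _ _ Ht0 Hrr; lra.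
have [p [Hp Hfp]] := Hiii (t * (r * r) / 2) Htrr.
pose u := vsub z p.
exists u, (dot u z - r * r / 2); split; last split.
- apply: nonzero_of_dot; have := Hfar p Hp; rewrite /f -/u; nra.
- move=> k Hk.
  pose q := vadd (vscale t k) (vscale (1 - t) p).
  have Hq : K q by apply: Hcv => //; lra.
  have Hfq := Hi q Hq.
  have Hid : f q = f p - 2 * t * (dot u k - dot u p) + t * t * dot (vsub k p) (vsub k p).
    rewrite /f /u /dot; sumcomb; rewrite /q /vadd /vscale /vsub; ring.
  have Hupz : dot u z - dot u p = f p.
    rewrite /f /u /dot; sumcomb; rewrite /vsub; ring.
  have HB := Hbd k p Hk Hp.
  have HB0 : 0 <= dot (vsub k p) (vsub k p) by apply: dot_ge0.
  have Hlt : 2 * t * (dot u k - dot u p) < t * (r * r).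
    have : t * t * dot (vsub k p) (vsub k p) <= t * (r * r / 2).
      have : t * dot (vsub k p) (vsub k p) <= t * C by apply: Rmult_le_compat_l; rewrite /C; lra.
      move=> H; have : t * (t * dot (vsub k p) (vsub k p)) <= t * (r * r / 2).
        apply: Rmult_le_compat_l; lra.
      lra.
    lra.
  have : dot u k - dot u p < r * r / 2.
    have : t * (2 * (dot u k - dot u p)) < t * (r * r) by lra.
    move=> H; have := Rmult_lt_reg_l _ _ _ Ht0 H; lra.
  have := Hfar p Hp; lra.
- lra.
Qed.
End Sep.

Section OneD.
Variable I : eqType.
Implicit Types (s r : seq I).

Lemma exists_max s (f : I -> R) : s <> [::] -> exists p, p \in s /\ forall i, i \in s -> f i <= f p.
Proof.
elim: s => [//|a s IH] _.
case: s IH => [|b s] IH.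
  exists a; split; first by rewrite mem_seq1.
  by move=> i; rewrite mem_seq1 => /eqP ->; lra.
have [p [Hp Hmax]] := IH ltac:(done).
case: (Rle_lt_dec (f a) (f p)) => Hap.
  exists p; split; first by rewrite in_cons Hp orbT.
  move=> i; rewrite in_cons => /orP [/eqP -> //|Hi]; exact: Hmax.
exists a; split; first by rewrite in_cons eqxx.
move=> i; rewrite in_cons => /orP [/eqP -> |Hi]; first lra.
have := Hmax i Hi; lra.
Qed.

Lemma fin_below r (g : I -> R) c : 0 < c -> (forall i, i \in r -> g i < c) ->
  exists M, 0 <= M /\ M < c /\ forall i, i \in r -> g i <= M.
Proof.
move=> Hc; elim: r => [|a r IH] H.
  by exists 0; split; [lra | split; [lra | by []]].
have [M [HM0 [HMc HM]]] := IH (fun i Hi => H i (ltac:(by rewrite in_cons Hi orbT))).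
have Ha := H a (mem_head a r).
exists (Rmax M (g a)); split; first by apply: Rle_trans (Rmax_l _ _).
split; first by apply: Rmax_lub_lt.
move=> i; rewrite in_cons => /orP [/eqP ->|Hi]; first exact: Rmax_r.
apply: Rle_trans (Rmax_l _ _); exact: HM.
Qed.

Lemma sum_ge0_in s (F : I -> R) : (forall i, i \in s -> 0 <= F i) -> 0 <= \big[Rplus/0]_(i <- s) F i.
Proof.
elim: s => [|a s IH] H; rewrite ?big_nil ?big_cons; first lra.
have := H a (mem_head a s); have := IH (fun i Hi => H i (ltac:(by rewrite in_cons Hi orbT))); lra.
Qed.

Lemma oneD s (y x : I -> R) :
  (forall i, i \in s -> 0 <= y i <= x i) ->
  (forall v, 0 < v -> (exists i, i \in s /\ v < x i) -> exists j, j \in s /\ y j <= v <= x j) ->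
  \big[Rplus/0]_(i <- s) (x i * x i - y i * y i) <=
     (\big[Rplus/0]_(i <- s) (x i - y i)) * (\big[Rplus/0]_(i <- s) (x i - y i)) /\
  (forall i, i \in s -> x i <= \big[Rplus/0]_(i <- s) (x i - y i)).
Proof.
have [n Hn] : exists n, (size s <= n)%N by exists (size s).
elim: n s Hn => [|n IH] s Hs Hyx Hcov.
  move: Hs; rewrite leqn0 => /nilP ->; rewrite !big_nil; split; [lra | by []].
case: (altP (s =P [::])) => [->|Hne].
  rewrite !big_nil; split; [lra | by []].
have [p [Hp Hmax]] := exists_max y (elimN eqP Hne).
pose r := rem p s.
have Hperm : perm_eq s (p :: r) by apply: perm_to_rem.
have Hmem : forall i, i \in s = (i == p) || (i \in r).
  by move=> i; rewrite (perm_mem Hperm) in_cons.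
have Hrs : forall i, i \in r -> i \in s by move=> i Hi; rewrite Hmem Hi orbT.
have Hsz : (size r <= n)%N by rewrite size_rem // -ltnS (leq_trans _ Hs) // prednK // lt0n size_eq0.
have Hcovr : forall v, 0 < v -> (exists i, i \in r /\ v < x i) -> exists j, j \in r /\ y j <= v <= x j.
  move=> v Hv [i [Hi Hvi]].
  have [j [Hj Hvj]] := Hcov v Hv (ex_intro _ i (conj (Hrs i Hi) Hvi)).
  move: Hj; rewrite Hmem => /orP [/eqP Hjp|Hj]; last by exists j.
  exists i; split => //; have := Hmax i (Hrs i Hi); have := Hyx i (Hrs i Hi); rewrite Hjp in Hvj; lra.
have [IH1 IH2] := IH r Hsz (fun i Hi => Hyx i (Hrs i Hi)) Hcovr.
rewrite !(perm_big _ Hperm) !big_cons /=.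
set Lr := \big[Rplus/0]_(j <- r) (x j - y j) in IH1 IH2 *.
set Ar := \big[Rplus/0]_(j <- r) (x j * x j - y j * y j) in IH1 *.
have HLr0 : 0 <= Lr by apply: sum_ge0_in => i Hi; have := Hyx i (Hrs i Hi); lra.
have Hyp := Hyx p Hp.
have HypL : y p <= Lr.
  case: (classic (exists i, i \in r /\ y p <= x i)) => [[i [Hi Hle]]|Hno].
    have := IH2 i Hi; lra.
  case: (Rle_lt_dec (y p) 0) => Hy0; first lra.
  have [M [HM0 [HMc HM]]] : exists M, 0 <= M /\ M < y p /\ forall i, i \in r -> x i <= M.
    apply: fin_below => // i Hi; apply: Rnot_le_lt => Hle; apply: Hno; by exists i.
  have Hv1 : 0 < (M + y p) / 2 by lra.
  have Hv2 : (M + y p) / 2 < x p by lra.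
  have [j [Hj Hvj]] := Hcov ((M + y p) / 2) Hv1 (ex_intro _ p (conj Hp Hv2)).
  move: Hj; rewrite Hmem => /orP [/eqP Hjp|Hj].
    rewrite Hjp in Hvj; lra.
  have := HM j Hj; lra.
split.
  have : 0 <= (x p - y p) * (Lr - y p) by apply: Rmult_le_pos; lra.
  nra.
move=> i; rewrite Hmem => /orP [/eqP ->|Hi]; first lra.
have := IH2 i Hi; lra.
Qed.
End OneD.

Section Det.
Import Order.TTheory GRing.Theory Num.Theory.
Local Open Scope ring_scope.
Variable d : nat.
Variable x0 : vec d.

Definition Mmat (v : 'I_d.+1 -> vec d) : 'M[R]_d.+1 :=
  \matrix_(j, c) oapp (fun i => v j i - x0 i) 1 (unlift ord0 c).

Definition rowk (k : vec d) : 'rV[R]_d.+1 :=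
  \row_c oapp (fun i => k i - x0 i) 1 (unlift ord0 c).

Lemma det_bound n (A : 'M[R]_n) C : (forall i j, `|A i j| <= C) ->
  `|\det A| <= \sum_(s : 'S_n) C ^+ n.
Proof.
move=> HA; rewrite /determinant.
apply: le_trans (ler_norm_sum _ _ _) _.
apply: ler_sum => s _.
rewrite normrM normrX normrN1 expr1n mul1r normr_prod.
rewrite -[n in C ^+ n]card_ord -prodr_const.
apply: ler_prod => i _; rewrite normr_ge0 /=; exact: HA.
Qed.

Lemma Mmat_replace v j k (lam : 'rV[R]_d.+1) :
  lam *m Mmat v = rowk k ->
  \det (Mmat (fun j2 => if j2 == j then k else v j2)) = lam 0 j * \det (Mmat v).
Proof.
move=> Hlam.
pose E : 'M[R]_d.+1 := \matrix_(a, b) if a == j then lam 0 b else (1%:M : 'M[R]_d.+1) a b.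
have HE : E *m Mmat v = Mmat (fun j2 => if j2 == j then k else v j2).
  apply/matrixP => a c; rewrite mxE [in RHS]mxE.
  under eq_bigr do rewrite /E mxE.
  case: (a == j).
    have := congr1 (fun M : 'rV[R]_d.+1 => M 0 c) Hlam; rewrite /rowk !mxE => <-.
    by apply: eq_bigr.
  have := congr1 (fun M : 'M[R]_d.+1 => M a c) (mul1mx (Mmat v)).
  rewrite [in RHS]mxE mxE => <-; by apply: eq_bigr.
have HdE : \det E = lam 0 j.
  rewrite (expand_det_col _ j) (bigD1 j) //= big1; last first.
    by move=> a /negPf Haj; rewrite /E !mxE Haj mul0r.
  rewrite addr0 /E !mxE eqxx /cofactor.
  have -> : row' j (col' j E) = 1%:M.
    apply/matrixP => a b; rewrite !mxE.
    rewrite eq_sym (negPf (neq_lift j a)) (inj_eq lift_inj); by [].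
  by rewrite det1 mulr1 -signr_odd addnn odd_double expr0 mulr1.
by rewrite -HE det_mulmx HdE.
Qed.

Lemma Mmat_coords v k (lam : 'rV[R]_d.+1) :
  lam *m Mmat v = rowk k ->
  \sum_j lam 0 j = 1 /\ forall i, \sum_j lam 0 j * (v j i - x0 i) = k i - x0 i.
Proof.
move=> Hlam; split.
  have := congr1 (fun M : 'rV[R]_d.+1 => M 0 ord0) Hlam; rewrite !mxE unlift_none /= => <-.
  by apply: eq_bigr => j _; rewrite !mxE unlift_none mulr1.
move=> i; have := congr1 (fun M : 'rV[R]_d.+1 => M 0 (lift ord0 i)) Hlam.
rewrite !mxE liftK /= => <-.
by apply: eq_bigr => j _; rewrite !mxE liftK.
Qed.

End Det.

Section DetNZ.
Import Order.TTheory GRing.Theory Num.Theory.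
Local Open Scope ring_scope.
Variable d : nat.
Variable x0 : vec d.

Definition vdeg (e : R) (j : 'I_d.+1) : vec d :=
  fun i => x0 i + (if unlift ord0 j is Some a then (if a == i then e else 0) else 0).

Lemma Mmat_deg_nz e : e != 0 -> \det (Mmat x0 (vdeg e)) != 0.
Proof.
move=> He; rewrite det_trig; last first.
  apply/is_trig_mxP => a c Hac; rewrite mxE /vdeg.
  case: (unliftP ord0 c) => [i' Hci|Hc]; last by move: Hac; rewrite Hc ltn0.
  rewrite /= [x0 _ + _]addrC addrK.
  case: (unliftP ord0 a) => [a' Ha|Ha]; last by [].
  case: eqP => // Heq; move: Hac; by rewrite Ha Hci Heq ltnn.
rewrite prodf_seq_neq0; apply/allP => j _ /=; rewrite mxE /vdeg.
case: (unliftP ord0 j) => [a Ha|Ha] /=; last exact: oner_neq0.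
by rewrite [x0 _ + _]addrC addrK eqxx.
Qed.
End DetNZ.

Section Conv.
Variable d : nat.

Lemma sum_zero_w (I : Type) (s : seq I) (w f : I -> R) : (forall i, 0 <= w i) ->
  \big[Rplus/0]_(i <- s) w i = 0 -> \big[Rplus/0]_(i <- s) (w i * f i) = 0.
Proof.
move=> Hw; elim: s => [|a s IH]; rewrite ?big_nil ?big_cons // => H.
have := sum_ge0 s Hw; have := Hw a => H1 H2.
have Ha : w a = 0 by lra.
rewrite IH; [rewrite Ha; ring | lra].
Qed.

Lemma conv_comb (K : vec d -> Prop) (I : Type) (s : seq I) (w : I -> R) (v : I -> vec d) :
  convex K -> (forall i, 0 <= w i) -> (forall i, K (v i)) -> 0 < \big[Rplus/0]_(i <- s) w i ->
  K (fun c => \big[Rplus/0]_(i <- s) (w i * v i c) / \big[Rplus/0]_(i <- s) w i).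
Proof.
move=> Hcv Hw Hv; elim: s => [|a s IH]; first by rewrite big_nil; lra.
rewrite big_cons => Hpos.
have HW' := sum_ge0 s Hw.
case: (Rle_lt_or_eq_dec 0 _ HW') => H.
  have Kp := IH H.
  set W' := \big[Rplus/0]_(j <- s) w j in H Hpos Kp *.
  set p := (fun c => _) in Kp.
  have Hwa := Hw a.
  have Ht : 0 <= w a / (w a + W') <= 1.
    have Hte : w a / (w a + W') * (w a + W') = w a by field; lra.
    move: Hte; set t := w a / (w a + W') => Hte; split; nra.
  have := Hcv (v a) p _ (Hv a) Kp Ht.
  match goal with |- K ?P -> K ?Q => have -> : Q = P end => //.
  apply: functional_extensionality => c; rewrite /vadd /vscale /p big_cons -/W'.
  field; lra.
have Hz := sum_zero_w (fun i => v i _) Hw (esym H).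
have Hwa : 0 < w a by rewrite -H in Hpos; lra.
match goal with |- K ?Q => have -> : Q = v a end; last exact: Hv.
apply: functional_extensionality => c; rewrite big_cons Hz -H; field; lra.
Qed.
End Conv.

Lemma sum_const_ord n c : \big[Rplus/0]_(j < n) c = INR n * c.
Proof.
elim: n => [|n IH]; first by rewrite big_ord0 /=; ring.
by rewrite big_ord_recr IH S_INR /=; ring.
Qed.

Lemma asym_det d (K : vec d -> Prop) : convex_body K -> forall rho, 1 < rho ->
  exists y : vec d, forall k, K k -> exists k', K k' /\
    forall i, - k i = y i + ((INR d + 1) * rho - 1) * k' i.
Proof.
move=> [[Hcl [Mb HMb]] [Hcv [x0 [r [Hr Hball]]]]] rho Hrho.
have Hx0 : K x0.
  apply: Hball; rewrite /ball; apply: vnorm_lt => //.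
  have -> : dot (vsub x0 x0) (vsub x0 x0) = 0.
    by rewrite /dot big1 // => i _; rewrite /vsub; ring.
  nra.
have HMb0 : 0 <= Mb.
  have := HMb x0 Hx0; have := sqrt_pos (dot x0 x0); rewrite /vnorm; lra.
pose C := 1 + 2 * Mb.
pose Vd (v : 'I_d.+1 -> vec d) := Rabs (\det (Mmat x0 v))%R.
pose Bd := (\sum_(s : 'S_d.+1) C ^+ d.+1)%R.
have Hbd : forall v, (forall j, K (v j)) -> Vd v <= Bd.
  move=> v Hv; apply/RleP; apply: det_bound => j c; rewrite mxE.
  apply/RleP.
  case: (unlift ord0 c) => [i|] /=.
    change (Rabs (v j i - x0 i) <= C).
    have := coord_le i (HMb _ (Hv j)); have := coord_le i (HMb _ Hx0).
    have := Rabs_triang (v j i) (- x0 i); rewrite Rabs_Ropp /C /Rminus; lra.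
  change (Rabs 1 <= C); rewrite Rabs_R1 /C; lra.
pose e := r / 2.
have Hdeg : forall j, K (vdeg x0 e j).
  move=> j; apply: Hball; rewrite /ball; apply: vnorm_lt => //.
  have -> : dot (vsub (vdeg x0 e j) x0) (vsub (vdeg x0 e j) x0) =
    \big[Rplus/0]_(i < d) (if unlift ord0 j is Some a then (if a == i then e * e else 0) else 0).
    apply: eq_bigr => i _; rewrite /vsub /vdeg.
    rewrite -!RplusE; change (0%R : R) with 0.
    case: (unlift ord0 j) => [a|]; last by ring.
    by case: (a == i); ring.
  case: (unlift ord0 j) => [a|]; last by rewrite big1 //; nra.
  rewrite (bigD1 a) //= eqxx big1; last by move=> i /negPf; rewrite eq_sym => ->.
  rewrite /e; nra.
have Hnz : (\det (Mmat x0 (vdeg x0 e)) != 0)%R.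
  apply: Mmat_deg_nz; apply/eqP; rewrite /e; change (r / 2 <> 0); lra.
pose E := fun t => exists v, (forall j, K (v j)) /\ t = Vd v.
have [Vs [Hub [Hap Hl]]] : exists m : R, (forall t : R, E t -> t <= m) /\ (forall b, b < m -> exists t : R, E t /\ b < t) /\
    (forall M, (forall t : R, E t -> t <= M) -> m <= M).
  apply: lub_ex; first by exists (Vd (vdeg x0 e)), (vdeg x0 e).
  by exists Bd => t [v [Hv ->]]; apply: Hbd.
have Hdpos : 0 < Vd (vdeg x0 e).
  apply: Rabs_pos_lt; exact/eqP.
have HVs : Vd (vdeg x0 e) <= Vs by apply: Hub; exists (vdeg x0 e).
have Hlt : Vs / rho < Vs.
  have : Vs / rho * rho = Vs by field; lra.
  nra.
have [t [[v [Hv ->]] HVv]] := Hap _ Hlt.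
have HVv0 : 0 < Vd v.
  have : 0 < Vs / rho by apply: Rdiv_lt_0_compat; lra.
  lra.
have Hunit : Mmat x0 v \in unitmx.
  rewrite unitmxE GRing.unitfE; apply/eqP => H0.
  move: HVv0; rewrite /Vd H0 Rabs_R0; lra.
exists (fun i => - (rho * \big[Rplus/0]_(j < d.+1) v j i)).
move=> k Hk.
pose lam := (rowk x0 k *m invmx (Mmat x0 v))%R.
have Hlam : (lam *m Mmat x0 v = rowk x0 k)%R by rewrite /lam mulmxKV.
have [Hs1 Hsc] := Mmat_coords Hlam.
have Hlamb : forall j, lam ord0 j < rho.
  move=> j; have Hrep := Mmat_replace j Hlam.
  have Hv' : forall j2, K ((fun j2 => if j2 == j then k else v j2) j2).
    by move=> j2 /=; case: (j2 == j).
  have := Hub _ (ex_intro _ _ (conj Hv' erefl)).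
  rewrite /Vd Hrep -RmultE Rabs_mult -/(Vd v) => H1.
  have H1' : Rabs (lam ord0 j) * Vd v <= Vs := H1.
  have H2 := Rle_abs (lam ord0 j).
  have H3 : Vs < rho * Vd v.
    have : Vs / rho * rho = Vs by field; lra.
    nra.
  nra.
pose om := fun j => rho - lam ord0 j.
pose W := \big[Rplus/0]_(j < d.+1) om j.
have Hs1' : \big[Rplus/0]_(j < d.+1) lam ord0 j = 1 := Hs1.
have HW : W = (INR d + 1) * rho - 1.
  have -> : W = \big[Rplus/0]_(j < d.+1) rho - \big[Rplus/0]_(j < d.+1) lam ord0 j.
    by rewrite /W /om; sumcomb; ring.
  rewrite Hs1' sum_const_ord S_INR; ring.
have HWpos : 0 < W by rewrite HW; have := pos_INR d; nra.
exists (fun c => \big[Rplus/0]_(j < d.+1) (om j * v j c) / W); split.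
  apply: conv_comb => // j; have := Hlamb j; rewrite /om; lra.
move=> i; rewrite -HW.
have Hsci : \big[Rplus/0]_(j < d.+1) (lam ord0 j * (v j i - x0 i)) = k i - x0 i := Hsc i.
have Hk1 : \big[Rplus/0]_(j < d.+1) (lam ord0 j * v j i) = k i.
  have : \big[Rplus/0]_(j < d.+1) (lam ord0 j * (v j i - x0 i)) =
     \big[Rplus/0]_(j < d.+1) (lam ord0 j * v j i) - x0 i * \big[Rplus/0]_(j < d.+1) lam ord0 j.
    by sumcomb; ring.
  rewrite Hsci Hs1'; lra.
have Hom : \big[Rplus/0]_(j < d.+1) (om j * v j i) =
    rho * \big[Rplus/0]_(j < d.+1) v j i - \big[Rplus/0]_(j < d.+1) (lam ord0 j * v j i).
  by rewrite /om; sumcomb; ring.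
rewrite Hom Hk1; field; lra.
Qed.

Lemma dot1 (x y : vec 1) : dot x y = x ord0 * y ord0.
Proof. by rewrite /dot big_ord1. Qed.

Lemma asym1 (K : vec 1 -> Prop) : convex_body K ->
  exists y : vec 1, forall k, K k -> exists k', K k' /\ forall i, - k i = y i + k' i.
Proof.
move=> [[Hcl [Mb HMb]] [Hcv [x0 [r [Hr Hball]]]]].
have Hx0 : K x0.
  apply: Hball; rewrite /ball; apply: vnorm_lt => //; rewrite dot1 /vsub; nra.
have Hbd : forall k, K k -> Rabs (k ord0) <= Mb by move=> k Hk; apply: coord_le; apply: HMb.
have [b [Hbub [Hbap _]]] : exists m : R, (forall t : R, (exists k, K k /\ t = k ord0) -> t <= m) /\
    (forall c, c < m -> exists t : R, (exists k, K k /\ t = k ord0) /\ c < t) /\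
    (forall M, (forall t : R, (exists k, K k /\ t = k ord0) -> t <= M) -> m <= M).
  apply: lub_ex; first by exists (x0 ord0), x0.
  exists Mb => t [k [Hk ->]]; have := Hbd k Hk; have := Rle_abs (k ord0); lra.
have [a' [Haub [Haap _]]] : exists m : R, (forall t : R, (exists k, K k /\ t = - k ord0) -> t <= m) /\
    (forall c, c < m -> exists t : R, (exists k, K k /\ t = - k ord0) /\ c < t) /\
    (forall M, (forall t : R, (exists k, K k /\ t = - k ord0) -> t <= M) -> m <= M).
  apply: lub_ex; first by exists (- x0 ord0), x0.
  exists Mb => t [k [Hk ->]]; have := Hbd k Hk; have := Rle_abs (- k ord0); rewrite Rabs_Ropp; lra.
pose a := - a'.
have Hle : forall k, K k -> a <= k ord0 <= b.
  move=> k Hk; split.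
    have := Haub (- k ord0) (ex_intro _ k (conj Hk erefl)); rewrite /a; lra.
  exact: Hbub (ex_intro _ k (conj Hk erefl)).
have Hclose : forall c, (forall eps, 0 < eps -> exists k, K k /\ Rabs (k ord0 - c) < eps) ->
    K (fun _ => c).
  move=> c Happ; apply: NNPP => Hn.
  have [r' [Hr' Hb']] := Hcl _ Hn.
  have [k [Hk Hkc]] := Happ r' Hr'.
  apply: (Hb' k) => //; rewrite /ball; apply: vnorm_lt => //.
  rewrite dot1 /vsub.
  have : Rabs (k ord0 - c) * Rabs (k ord0 - c) < r' * r'.
    have := Rabs_pos (k ord0 - c); nra.
  rewrite -Rabs_mult Rabs_pos_eq //; exact: Rle_0_sqr.
have HB : K (fun _ => b).
  apply: Hclose => eps He.
  have [t [[k [Hk ->]] Hkt]] := Hbap (b - eps) ltac:(lra).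
  exists k; split => //; have [H1 H2] := Hle k Hk; rewrite Rabs_left1; lra.
have HA : K (fun _ => a).
  apply: Hclose => eps He.
  have [t [[k [Hk ->]] Hkt]] := Haap (a' - eps) ltac:(lra).
  exists k; split => //; have [H1 H2] := Hle k Hk; rewrite /a in H1 *; rewrite Rabs_pos_eq; lra.
exists (fun _ => - (a + b)) => k Hk.
have [Hak Hkb] := Hle k Hk.
exists (fun _ => a + b - k ord0); split; last first.
  move=> i; have -> : k i = k ord0 by rewrite (ord1 i).
  ring.
case: (Rle_lt_or_eq_dec a b ltac:(lra)) => Hab; last first.
  have -> : (fun _ : 'I_1 => a + b - k ord0) = (fun _ => a).
    apply: functional_extensionality => _; lra.
  exact: HA.
pose t := (b - k ord0) / (b - a).
have Ht : 0 <= t <= 1.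
  have Hte : t * (b - a) = b - k ord0 by rewrite /t; field; lra.
  split; nra.
have := Hcv _ _ _ HB HA Ht.
match goal with |- K ?P -> K ?Q => have -> : Q = P end => //.
apply: functional_extensionality => i; rewrite /vadd /vscale /t; field; lra.
Qed.

Lemma asym d (K : vec d -> Prop) : convex_body K -> (1 <= d)%N -> forall e, 0 < e ->
  exists y : vec d, forall k, K k -> exists k', K k' /\
    forall i, - k i = y i + (INR d + e * (INR d - 1)) * k' i.
Proof.
case: d K => [|[|d']] K HK Hd e He //.
  have [y Hy] := asym1 HK; exists y => k Hk.
  have [k' [Hk' H]] := Hy k Hk; exists k'; split => // i; rewrite H /=; ring.
have H2 : 2 <= INR d'.+2.
  have := le_INR 2 d'.+2 ltac:(apply/leP; done); rewrite /=; lra.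
pose rho := 1 + e * (INR d'.+2 - 1) / (INR d'.+2 + 1).
have Hrho : 1 < rho.
  rewrite /rho; have : 0 < e * (INR d'.+2 - 1) / (INR d'.+2 + 1); last lra.
  apply: Rdiv_lt_0_compat; [apply: Rmult_lt_0_compat|]; lra.
have [y Hy] := asym_det HK Hrho.
exists y => k Hk; have [k' [Hk' H]] := Hy k Hk; exists k'; split => // i.
rewrite H; congr (_ + _ * _); rewrite /rho; field; lra.
Qed.

Lemma center_in d (K : vec d -> Prop) : convex_body K -> exists x0 r, 0 < r /\ K x0 /\ forall y, ball x0 r y -> K y.
Proof.
move=> [_ [_ [x0 [r [Hr Hball]]]]]; exists x0, r; split => //; split => //.
apply: Hball; rewrite /ball; apply: vnorm_lt => //.
have -> : dot (vsub x0 x0) (vsub x0 x0) = 0.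
  by rewrite /dot big1 // => i _; rewrite /vsub; ring.
nra.
Qed.

Section DotR.
Variable d : nat.
Implicit Types x y z u : vec d.
Lemma dot_vadd_r u x y : dot u (vadd x y) = dot u x + dot u y.
Proof. rewrite /dot; sumcomb; rewrite /vadd; ring. Qed.
Lemma dot_vscale_r u c x : dot u (vscale c x) = c * dot u x.
Proof. rewrite /dot; sumcomb; rewrite /vscale; ring. Qed.
Lemma dot_sum_r (n : nat) u (w : 'I_n -> R) (o : 'I_n -> vec d) :
  dot u (fun c => \big[Rplus/0]_(i < n) (w i * o i c)) = \big[Rplus/0]_(i < n) (w i * dot u (o i)).
Proof.
rewrite /dot; under eq_bigr do rewrite big_distrr.
rewrite exchange_big; apply: eq_bigr => i _; rewrite big_distrr; apply: eq_bigr => c _ /=; ring.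
Qed.
End DotR.

Lemma div_lt_helper tau a b v : 0 < tau -> (b - a) / tau < v -> b < a + tau * v.
Proof.
move=> Ht H; have := Rmult_lt_compat_r tau _ _ Ht H.
have -> : (b - a) / tau * tau = b - a by field; lra.
lra.
Qed.

Lemma sum_pos_ord n (f : 'I_n.+1 -> R) : (forall i, 0 < f i) -> 0 < \big[Rplus/0]_(i < n.+1) f i.
Proof.
move=> H; rewrite big_ord_recl.
have : 0 <= \big[Rplus/0]_(i < n) f (lift ord0 i) by apply: sum_ge0 => i; apply: Rlt_le.
have := H ord0; rewrite /=; lra.
Qed.

Theorem corollary6 (d n : nat) (K : vec d -> Prop) (o : 'I_n -> vec d)
  (tau : 'I_n -> R) :
  convex_body K ->
  (forall i, 0 < tau i) ->
  non_separable (fun i => homot (o i) (tau i) K) ->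
  exists t : vec d,
    forall x, family_union (fun i => homot (o i) (tau i) K) x ->
      homot t ((INR d + 1) / 2 * \big[Rplus/0]_(i < n) tau i) K x.
Proof.
move=> HK Htau Hns.
have [x0 [r0 [Hr0 [Hx0 Hball0]]]] := center_in HK.
case: n o tau Htau Hns => [|n] o tau Htau Hns.
  by exists x0 => x [i _]; case: i.
case: d K o HK Hns x0 Hr0 Hx0 Hball0 => [|d] K o HK Hns x0 Hr0 Hx0 Hball0.
  exists x0 => x _; exists x0; split => //.
  by apply: functional_extensionality => i; case: i.
have [[Hcl Hbd] [Hcv _]] := HK.
set F := fun i => homot (o i) (tau i) K.
set S := \big[Rplus/0]_(i < n.+1) tau i.
pose Q := \big[Rplus/0]_(i < n.+1) (tau i * tau i).
have HS : 0 < S by apply: sum_pos_ord.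
have HQ : 0 < Q by apply: sum_pos_ord => i; have := Htau i; nra.
have HQS : Q <= S * S by apply: sum_sq_le => i; apply: Rlt_le.
pose e := Q / (S * S).
have He : 0 < e by apply: Rdiv_lt_0_compat; nra.
have [y Hy] := asym HK (ltac:(done) : (1 <= d.+1)%N) He.
set D := INR d.+1 + e * (INR d.+1 - 1) in Hy *.
have Hd1 : 1 <= INR d.+1 by rewrite S_INR; have := pos_INR d; lra.
have HD : 0 <= D.
  rewrite /D; have : 0 <= e * (INR d.+1 - 1) by apply: Rmult_le_pos; lra.
  lra.
set s := (INR d.+1 + 1) / 2 * S.
pose c := (S * S + Q + D * (S * S - Q)) / (2 * S).
have Hsc : c <= s.
  rewrite /c /s /D /e.
  have Hk : (INR d.+1 + 1) / 2 * S - (S * S + Q + (INR d.+1 + Q / (S * S) * (INR d.+1 - 1)) * (S * S - Q)) / (2 * S)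
     = (INR d.+1 - 1) * (Q * Q) / (2 * S * S * S) by field; lra.
  have : 0 <= (INR d.+1 - 1) * (Q * Q) / (2 * S * S * S).
    apply: Rmult_le_pos; [apply: Rmult_le_pos; nra|].
    apply: Rlt_le; apply: Rinv_0_lt_compat; have := Rmult_lt_0_compat _ _ HS HS; nra.
  lra.
pose t := fun c0 => \big[Rplus/0]_(i < n.+1) (tau i * o i c0) / S + ((S * S - Q) / (2 * S)) * y c0 - (s - c) * x0 c0.
exists t => x Hx.
have Hs : 0 < s by rewrite /s; have := pos_INR d.+1; nra.
pose z := fun c0 => (x c0 - t c0) / s.
suff Hz : K z.
  exists z; split => //; apply: functional_extensionality => c0.
  rewrite /vadd /vscale /z; field; lra.
apply: NNPP => Hz.
have [u [m [Hu [Hum Hmz]]]] := separation Hcl Hcv Hbd (ex_intro _ x0 Hx0) Hz.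

have [Mb HMb] := Hbd.
pose Uabs := \big[Rplus/0]_(i < d.+1) (Rabs (u i) * Mb).
have Hlow : forall k, K k -> - dot u k <= Uabs.
  move=> k Hk; rewrite /dot sumN; apply: sum_le => i.
  have := coord_le i (HMb k Hk); have := Rabs_mult (u i) (k i).
  have := Rle_abs (- (u i * k i)); rewrite Rabs_Ropp; have := Rabs_pos (u i).
  have := Rabs_pos (k i); nra.
have [hu [Hhu_ub [Hhu_ap Hhu_l]]] : exists hu : R,
    (forall v : R, (exists k, K k /\ v = dot u k) -> v <= hu) /\
    (forall b, b < hu -> exists v : R, (exists k, K k /\ v = dot u k) /\ b < v) /\
    (forall M, (forall v : R, (exists k, K k /\ v = dot u k) -> v <= M) -> hu <= M).
  apply: lub_ex; first by exists (dot u x0), x0.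
  by exists m => v [k [Hk ->]]; apply: Hum.
have [g [Hg_ub [Hg_ap Hg_l]]] : exists g : R,
    (forall v : R, (exists k, K k /\ v = - dot u k) -> v <= g) /\
    (forall b, b < g -> exists v : R, (exists k, K k /\ v = - dot u k) /\ b < v) /\
    (forall M, (forall v : R, (exists k, K k /\ v = - dot u k) -> v <= M) -> g <= M).
  apply: lub_ex; first by exists (- dot u x0), x0.
  by exists Uabs => v [k [Hk ->]]; apply: Hlow.
have Hhu : forall k, K k -> dot u k <= hu by move=> k Hk; apply: Hhu_ub; exists k.
have Hg : forall k, K k -> - dot u k <= g by move=> k Hk; apply: Hg_ub; exists k.
have Hhum : hu <= m by apply: Hhu_l => v [k [Hk ->]]; apply: Hum.
have Hgy : g <= dot u y + D * hu.
  apply: Hg_l => v [k [Hk ->]].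
  have [k' [Hk' Hkk]] := Hy k Hk.
  have -> : - dot u k = dot u y + D * dot u k'.
    have -> : - dot u k = \big[Rplus/0]_(i < d.+1) (u i * (- k i)).
      by rewrite /dot sumN; apply: eq_bigr => i _; ring.
    under eq_bigr => i _ do rewrite Hkk.
    rewrite /dot; sumcomb; ring.
  have := Hhu k' Hk'; nra.
have Hduu : 0 < dot u u.
  have [i Hi] := Hu; have := dot_term u i; have := Rsqr_pos_lt (u i) Hi; rewrite /Rsqr; lra.
pose del := r0 / (1 + dot u u).
have Hdel : 0 < del by apply: Rdiv_lt_0_compat; lra.
have Hdel2 : r0 = del * (1 + dot u u) by rewrite /del; field; lra.
have Hin : forall sg, sg * sg = 1 -> K (vadd x0 (vscale (sg * del) u)).
  move=> sg Hsg; apply: Hball0; rewrite /ball; apply: vnorm_lt => //.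
  have -> : dot (vsub (vadd x0 (vscale (sg * del) u)) x0) (vsub (vadd x0 (vscale (sg * del) u)) x0)
      = (sg * sg) * (del * del) * dot u u.
    rewrite /dot; sumcomb; rewrite /vsub /vadd /vscale; ring.
  rewrite Hsg Hdel2; have := Rmult_lt_0_compat _ _ Hdel Hdel; nra.
have Hw : 0 < hu + g.
  have H1 := Hhu _ (Hin 1 ltac:(ring)).
  have H2 := Hg _ (Hin (-1) ltac:(ring)).
  rewrite !dot_vadd_r !dot_vscale_r in H1 H2.
  have := Rmult_lt_0_compat _ _ Hdel Hduu; lra.
pose al := fun i => dot u (o i) - tau i * g.
pose be := fun i => dot u (o i) + tau i * hu.
have HF1 : forall i X, F i X -> al i <= dot u X <= be i.
  move=> i X [k [Hk ->]]; rewrite dot_vadd_r dot_vscale_r /al /be.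
  have := Hhu k Hk; have := Hg k Hk; have := Htau i; nra.
have HF2 : forall i b, b < be i -> exists X, F i X /\ b < dot u X.
  move=> i b Hb.
  have Hb' : (b - dot u (o i)) / tau i < hu.
    have Ht := Htau i.
    have -> : hu = (tau i * hu) / tau i by field; lra.
    apply: Rmult_lt_compat_r; [by apply: Rinv_0_lt_compat | rewrite /be in Hb; lra].
  have [v [[k [Hk ->]] Hv]] := Hhu_ap _ Hb'.
  exists (vadd (o i) (vscale (tau i) k)); split; first by exists k.
  rewrite dot_vadd_r dot_vscale_r; exact: div_lt_helper (Htau i) Hv.
have HF3 : forall i b, al i < b -> exists X, F i X /\ dot u X < b.
  move=> i b Hb.
  have Hb' : (- b - - dot u (o i)) / tau i < g.
    have Ht := Htau i.
    have -> : g = (tau i * g) / tau i by field; lra.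
    apply: Rmult_lt_compat_r; [by apply: Rinv_0_lt_compat | rewrite /al in Hb; lra].
  have [v [[k [Hk ->]] Hv]] := Hg_ap _ Hb'.
  exists (vadd (o i) (vscale (tau i) k)); split; first by exists k.
  rewrite dot_vadd_r dot_vscale_r; have := div_lt_helper (Htau i) Hv; lra.
have Hne : index_enum 'I_n.+1 <> [::].
  by move=> H; have := mem_index_enum (ord0 : 'I_n.+1); rewrite H.
have [m0 [_ Hmax]] := exists_max be Hne.
pose B := be m0.
have Hmax' : forall i, be i <= B by move=> i; apply: Hmax; apply: mem_index_enum.
have Hab : forall i, al i <= be i by move=> i; rewrite /al /be; have := Htau i; nra.
have Hcov : forall v, 0 < v -> (exists i, i \in index_enum 'I_n.+1 /\ v < B - al i) ->
    exists j, j \in index_enum 'I_n.+1 /\ B - be j <= v <= B - al j.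
  move=> v Hv Hex.
  have [i [_ Hvi]] := Hex.
  pose b := B - v.
  have Hb1 : b < be m0 by rewrite /b /B; lra.
  have Hb2 : al i < b by rewrite /b; lra.
  have [X1 [HX1 H1]] := HF2 m0 b Hb1.
  have [X2 [HX2 H2]] := HF3 i b Hb2.
  pose lam := (b - dot u X2) / (dot u X1 - dot u X2).
  have Hlam : 0 <= lam <= 1.
    have Hl : lam * (dot u X1 - dot u X2) = b - dot u X2 by rewrite /lam; field; lra.
    split; nra.
  pose Z := vadd (vscale lam X1) (vscale (1 - lam) X2).
  have HZb : dot u Z = b.
    rewrite /Z dot_vadd_r !dot_vscale_r /lam; field; lra.
  have HZ : conv (family_union F) Z.
    move=> C HC Hsub; apply: HC => //; apply: Hsub; [exists m0 | exists i]; done.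
  have [j [X [HX HXb]]] := Hns u b Hu (ex_intro _ Z (conj HZ HZb)).
  exists j; split; first exact: mem_index_enum.
  have := HF1 j X HX; rewrite /hyperplane in HXb; rewrite /b in HXb; lra.
have Hyx : forall i, i \in index_enum 'I_n.+1 -> 0 <= B - be i <= B - al i.
  by move=> i _; have := Hmax' i; have := Hab i; lra.
have [Hsum _] := @oneD _ (index_enum 'I_n.+1) (fun i => B - be i) (fun i => B - al i) Hyx Hcov.
pose P := \big[Rplus/0]_(i < n.+1) (tau i * dot u (o i)).
have Hsum1 : \big[Rplus/0]_(i <- index_enum 'I_n.+1) ((B - al i) * (B - al i) - (B - be i) * (B - be i))
   = (hu + g) * (2 * B * S - 2 * P - (hu - g) * Q).
  rewrite /S /P /Q; sumcomb; rewrite /al /be; ring.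
have HL : \big[Rplus/0]_(i <- index_enum 'I_n.+1) ((B - al i) - (B - be i)) = (hu + g) * S.
  rewrite /S; sumcomb; rewrite /al /be; ring.
rewrite Hsum1 HL in Hsum.
have Ha : 2 * B * S - 2 * P - (hu - g) * Q <= (hu + g) * S * S.
  apply: (Rmult_le_reg_l (hu + g)) => //; lra.
have gen : forall (k1 k2 k3 : R) (A : vec d.+1),
    dot u (fun c0 => A c0 / k1 + k2 * y c0 - k3 * x0 c0) = / k1 * dot u A + k2 * dot u y - k3 * dot u x0.
  move=> k1 k2 k3 A; rewrite /dot /Rdiv; sumcomb; ring.
have Ht1 : dot u t = / S * dot u (fun c0 => \big[Rplus/0]_(i < n.+1) (tau i * o i c0))
    + ((S * S - Q) / (2 * S)) * dot u y - (s - c) * dot u x0 := gen _ _ _ _.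
rewrite dot_sum_r -/P in Ht1.
have Hx0hu := Hhu x0 Hx0.
have Hc2 : 2 * S * c = S * S + Q + D * (S * S - Q) by rewrite /c; field; lra.
have HB : B <= dot u t + s * hu.
  apply: (Rmult_le_reg_l (2 * S)); first lra.
  rewrite Ht1.
  have e1 : g * (S * S - Q) <= (dot u y + D * hu) * (S * S - Q) by apply: Rmult_le_compat_r; lra.
  have e2 : (s - c) * dot u x0 <= (s - c) * hu by apply: Rmult_le_compat_l; lra.
  have e2' : 2 * S * ((s - c) * dot u x0) <= 2 * S * ((s - c) * hu) by apply: Rmult_le_compat_l; lra.
  have E1 : 2 * S * (/ S * P + (S * S - Q) / (2 * S) * dot u y - (s - c) * dot u x0 + s * hu)
     = 2 * P + (S * S - Q) * dot u y - 2 * S * ((s - c) * dot u x0) + 2 * S * s * hu by field; lra.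
  have e5 : hu * (2 * S * c) = hu * (S * S + Q + D * (S * S - Q)) by rewrite Hc2.
  rewrite E1.
  lra.
have [j HXj] := Hx.
have Hxj := HF1 j x HXj.
have Hxe : x = vadd t (vscale s z).
  apply: functional_extensionality => c0; rewrite /vadd /vscale /z; field; lra.
have Hdx : dot u x = dot u t + s * dot u z by rewrite {1}Hxe dot_vadd_r dot_vscale_r.
have := Hmax' j.
have : s * hu < s * dot u z by apply: Rmult_lt_compat_l; lra.
lra.
Qed.
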